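(* Let $h:\mathbb{R}\to[0,+\infty)$ be a super-multiplicative function (i.e. $h(xy)\ge h(x)h(y)$ for all $x,y\in\mathbb{R}$) such that $h(t)\ge t$ for all $t$ and $h(1)=1$. Let $f:(a,b)\to\mathbb{R}$ be $h$-mid-convex, i.e. $$f\Big(\frac{x+y}{2}\Big)\le h\Big(\frac12\Big)\big(f(x)+f(y)\big)\quad\text{for all } x,y\in(a,b).$$ Suppose there is a set $M\subseteq(a,b)$ of positive Lebesgue measure such that $f$ is bounded above on $M$. Then $f$ is continuous. *)

(* Defs.v *)
From mathcomp Require Import all_boot all_algebra all_classical all_reals all_analysis.
Import Num.Theory.
Local Open Scope ring_scope.
Local Open Scope classical_set_scope.

(* The Lebesgue sigma-algebra on R: the Caratheodory-measurable sets for the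
   Lebesgue outer measure, i.e. the domain of the library's
   [completed_lebesgue_measure]. *)
Definition lebesgue_carrier (R : realType) :=
  caratheodory_type ((wlength (R:=R) idfun)^*%mu).

Definition lebesgue_measurable {R : realType} (A : set R) : Prop :=
  @measurable _ (lebesgue_carrier R) (A : set (lebesgue_carrier R)).

Definition lebesgue_meas {R : realType} (A : set R) : \bar R :=
  @completed_lebesgue_measure R (A : set (lebesgue_carrier R)).

(* Main.v *)
Require Import Defs.
From mathcomp Require Import all_boot all_algebra all_classical all_reals all_analysis.
From mathcomp Require Import all_order ring lra.
Import Num.Theory numFieldNormedType.Exports.
Import Order.TTheory GRing.Theory.
Local Open Scope ring_scope.
Local Open Scope classical_set_scope.
Section S.
Context {R : realType}.
Notation lam := ((wlength (R:=R) idfun)^*%mu).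
Local Open Scope ereal_scope.

Lemma lam_ge0 (A : set R) : 0 <= lam A.
Proof. exact: (mu_ext_ge0 (wlength_ge0 (R:=R) idfun)). Qed.

Lemma lam_le (A B : set R) : A `<=` B -> lam A <= lam B.
Proof. move=> AB; exact: (le_mu_ext (wlength (R:=R) idfun) AB). Qed.

Lemma lam_itv (i : interval R) : lam [set` i] =
  (if i.1 < i.2 then (i.2 : \bar R) - i.1 else 0).
Proof. exact (lebesgue_measure_itv i). Qed.

Lemma lam_refl (t : R) (A : set R) : lam [set (t - x)%R | x in A] <= lam A.
Proof.
apply: le_ereal_inf_tmp => _ [F [mF AF] <-].
pose G k := [set (t - x)%R | x in F k].
apply: (@le_trans _ _ (lam (\bigcup_k G k))).
  apply: lam_le => _ [x Ax <-].
  have [k _ Fkx] := AF x Ax; exists k => //; exists x => //.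
apply: le_trans; first exact: (mu_ext_sigma_subadditive (wlength_ge0 (R:=R) idfun)).
apply: lee_nneseries => [k _ _|k _]; first exact: lam_ge0.
have [[x1 x2] _ Fk] := mF k.
have -> : G k = [set` Interval (BLeft (t - x2)%R) (BLeft (t - x1)%R)].
  rewrite /G -Fk; apply/seteqP; split => y /=.
    move=> [z]; rewrite !in_itv /= => /andP[h1 h2] <-.
    by apply/andP; split; lra.
  rewrite in_itv /= => /andP[h1 h2]; exists (t - y)%R; last by lra.
  by rewrite in_itv /=; apply/andP; split; lra.
rewrite lam_itv -Fk wlength_itv /= !lte_fin.
have -> : ((t - x2 < t - x1) = (x1 < x2))%R.
  by apply/idP/idP => ?; lra.
case: ifP => _ //; rewrite -!EFinD lee_fin; lra.
Qed.

Lemma lam0 : lam set0 = 0.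
Proof. exact (@mu_ext0 _ (ocitv_type R) R (wlength idfun) (wlength0 idfun) (wlength_ge0 idfun)). Qed.

Lemma lam_sub (F : (set R)^nat) : lam (\bigcup_k F k) <= \sum_(0 <= k <oo) lam (F k).
Proof. exact: (mu_ext_sigma_subadditive (wlength_ge0 (R:=R) idfun)). Qed.

Lemma lam_dense (A : set R) : 0 < lam A -> lam A < +oo ->
  exists p q : R, (p < q)%R /\
    (q - p)%:E < lam (A `&` `]p, q]) + lam (A `&` `]p, q]).
Proof.
move=> A0 Aoo.
have fin : lam A \is a fin_num by rewrite ge0_fin_numE // lam_ge0.
have m0 : (0 < fine (lam A))%R by rewrite -lte_fin fineK.
have [_ [F [mF AF] <-] Hlt] := lb_ereal_inf_adherent m0 fin.
rewrite fineK // in Hlt.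
case: (pselect (exists p q : R, (p < q)%R /\
    (q - p)%:E < lam (A `&` `]p, q]) + lam (A `&` `]p, q]))) => // Hn.
exfalso.
have key k : lam (A `&` F k) + lam (A `&` F k) <= wlength idfun (F k).
  have [[x1 x2] _ Fk] := mF k.
  rewrite -Fk wlength_itv /= lte_fin.
  case: (boolP (x1 < x2)%R) => h.
    rewrite leNgt; apply/negP => H'; apply: Hn; exists x1, x2; split => //.
  have E : (`]x1, x2]%classic : set R) = set0.
    by rewrite set_itv_ge //= bnd_simp.
  by rewrite E setI0 lam0 adde0.
have h1 : lam A <= \sum_(0 <= k <oo) lam (A `&` F k).
  apply: le_trans (lam_sub _); apply: lam_le => x Ax.
  by have [k _ Fkx] := AF x Ax; exists k.
have h2 : lam A + lam A <= \sum_(0 <= k <oo) wlength idfun (F k).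
  apply: le_trans (leeD h1 h1) _.
  rewrite -nneseriesD; last 2 first.
  - by move=> *; exact: lam_ge0.
  - by move=> *; exact: lam_ge0.
  by apply: lee_nneseries => [k _ _|k _]; [exact: adde_ge0 (lam_ge0 _) (lam_ge0 _)|exact: key].
by have := lt_le_trans Hlt h2; rewrite ltxx.
Qed.

Lemma lam_mid (A : set R) (p q : R) : lebesgue_measurable A -> (p < q)%R ->
  (q - p)%:E < lam (A `&` `]p, q]) + lam (A `&` `]p, q]) ->
  exists c0 r : R, (0 < r)%R /\ forall c : R, (`|c - c0| < r)%R ->
    exists x y : R, [/\ A x, A y & c = (x + y) / 2]%R.
Proof.
move=> mA pq H.
set B := A `&` `]p, q].
have Bfin : lam B \is a fin_num.
  have h : lam B <= lam (`]p, q]%classic : set R) by apply: lam_le => z [].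
  rewrite ge0_fin_numE ?lam_ge0 //; apply: (le_lt_trans h).
  by rewrite lam_itv /= lte_fin pq ltry.
set be := fine (lam B).
have Be : lam B = be%:E by rewrite fineK.
rewrite Be -EFinD lte_fin in H.
exists ((p + q) / 2)%R, ((be + be - (q - p)) / 4)%R; split; first by lra.
move=> c Hc.
case: (pselect (exists x y : R, [/\ A x, A y & c = (x + y) / 2]%R)) => // Hn.
exfalso.
set s := (c - (p + q) / 2)%R.
have hs : s = (c - (p + q) / 2)%R by [].
have s1 := ler_norm s.
have s2 := ler_norm (- s); rewrite normrN in s2.
set B' := [set (2 * c - y)%R | y in B].
have BB' : B = [set (2 * c - y)%R | y in B'].
  apply/seteqP; split => z.
    by move=> Bz; exists (2 * c - z)%R; [exists z | lra].
  by move=> [_ [y By <-] <-]; rewrite (_ : (2 * c - (2 * c - y))%R = y) //; lra.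
have le1 : lam B <= lam B' by rewrite {1}BB'; exact: lam_refl.
have mJ : lebesgue_measurable (`]p, q]%classic : set R).
  apply: sub_caratheodory; apply: sub_sigma_algebra; by exists (p, q).
have mB : lebesgue_measurable B by exact: measurableI.
have E1 : (B `|` B') `&` B = B by rewrite setIUl setIid; apply/setUidl => z [].
have E2 : (B `|` B') `&` ~` B = B'.
  rewrite setIUl setICr set0U; apply/setIidl => z [y By <-] Bz.
  apply: Hn; exists (2 * c - y)%R, y; split.
  - by case: Bz.
  - by case: By.
  - lra.
have cara : lam (B `|` B') = lam B + lam B'.
  have := mB (B `|` B'); rewrite E1 E2; exact.
have sub : B `|` B' `<=` `[(p - 2 * `|s|)%R, (q + 2 * `|s|)%R]%classic.
  move=> z [[_]|[y [_]]]; rewrite /= !in_itv /= => /andP[h1 h2].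
    by apply/andP; split; lra.
  by move=> <-; apply/andP; split; lra.
have := lam_le _ _ sub; rewrite lam_itv /= cara lte_fin.
have -> : (p - 2 * `|s| < q + 2 * `|s|)%R by lra.
rewrite -EFinD.
move=> /(le_trans (leeD (lexx (lam B)) le1)); rewrite Be -EFinD lee_fin.
lra.
Qed.
End S.

Section Conv.
Context {R : realType}.
Variables (a b : R) (f : R -> R).
Hypothesis J : forall x y, a < x < b -> a < y < b -> f ((x + y) / 2) <= (f x + f y) / 2.

Definition Bd (c r K : R) := 0 < r /\ forall t, `|t - c| < r -> a < t < b /\ f t <= K.

Lemma pow2_big (e y : R) : 0 < e -> exists n : nat, y < e * 2 ^+ n.
Proof.
move=> e0.
have [y0|y0] := leP y 0.
  by exists 0%N; rewrite expr0 mulr1; lra.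
have h := archi_boundP (ltW (divr_gt0 y0 e0)).
set n := Num.Def.archi_bound _ in h.
exists n.
have h2 : (n%:R : R) <= 2 ^+ n.
  rewrite -natrX ler_nat; exact: ltnW (ltn_expl _ _).
rewrite -ltr_pdivrMl //; lra.
Qed.

Lemma Bd_shift c r K z : Bd c r K -> a < z < b ->
  Bd ((z + c) / 2) (r / 2) ((f z + K) / 2).
Proof.
move=> [r0 H] /andP[za zb]; split; first lra.
move=> t; rewrite ltr_norml => /andP[t1 t2].
have /H [/andP[u1 u2] fu] : `|(2 * t - z) - c| < r by rewrite ltr_norml; apply/andP; split; lra.
split; first by apply/andP; split; lra.
have -> : t = (z + (2 * t - z)) / 2 by field.
have hz : a < z < b by apply/andP; split.
have hu : a < 2 * t - z < b by apply/andP; split.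
have := J z (2 * t - z) hz hu; lra.
Qed.

Lemma Bd_iter c r K x0 : Bd c r K -> a < x0 < b -> forall n : nat,
  exists K', Bd (x0 + (c - x0) / 2 ^+ n) (r / 2 ^+ n) K'.
Proof.
move=> H x0ab; elim => [|n [K' IH]].
  by exists K; rewrite expr0 !divr1 addrC subrK.
have := @Bd_shift _ _ _ x0 IH x0ab; exists ((f x0 + K') / 2).
have p0 : (0 < 2 ^+ n :> R) by apply: exprn_gt0.
have -> : x0 + (c - x0) / 2 ^+ n.+1 = (x0 + (x0 + (c - x0) / 2 ^+ n)) / 2.
  by rewrite exprS; field; rewrite gt_eqF.
have -> : r / 2 ^+ n.+1 = r / 2 ^+ n / 2.
  by rewrite exprS; field; rewrite gt_eqF.
exact.
Qed.

Lemma nd (h p : R) : 0 < p -> `|h / p| = `|h| / p.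
Proof. by move=> p0; rewrite normrM normfV (gtr0_norm p0). Qed.

Lemma p2 (n : nat) : 1 <= (2 ^+ n : R).
Proof. by apply: exprn_ege1; lra. Qed.

Lemma Bd_at c r K x0 : Bd c r K -> a < x0 < b -> exists r' K', Bd x0 r' K'.
Proof.
move=> H hx; have /andP[xa xb] := hx.
set e := Num.min (x0 - a) (b - x0).
have e0 : 0 < e by rewrite lt_min; apply/andP; split; lra.
have e1 : e <= x0 - a by rewrite ge_min lexx.
have e2 : e <= b - x0 by rewrite ge_min lexx orbT.
have [n Hn] := @pow2_big e `|c - x0| e0.
have [K' HB] := @Bd_iter c r K x0 H hx n.
have p0 : (0 < 2 ^+ n :> R) by apply: exprn_gt0.
set d := (c - x0) / 2 ^+ n in HB.
have hd : `|d| < e by rewrite /d nd // ltr_pdivrMr.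
move: hd; rewrite ltr_norml => /andP[d1 d2].
have hz : a < x0 - d < b by apply/andP; split; lra.
have := @Bd_shift _ _ _ (x0 - d) HB hz.
have -> : (x0 - d + (x0 + d)) / 2 = x0 by field.
by move=> HH; do 2 eexists; exact: HH.
Qed.

Lemma cont_at x0 r K : Bd x0 r K -> {for x0, continuous f}.
Proof.
move=> [r0 H].
have [hx0 fx0] : a < x0 < b /\ f x0 <= K by apply: H; rewrite subrr normr0.
have inball u : `|u| < r -> a < x0 + u < b /\ f (x0 + u) <= K.
  by move=> hu; apply: H; rewrite addrAC subrr add0r.
have small n h : `|h| < r -> `|h / 2 ^+ n| < r.
  move=> hh; rewrite nd ?exprn_gt0 // ltr_pdivrMr ?exprn_gt0 //.
  have := p2 n; have := normr_ge0 h; nra.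
have up n h : `|h| < r -> f (x0 + h / 2 ^+ n) - f x0 <= (K - f x0) / 2 ^+ n.
  move=> hh; elim: n => [|n IH].
    by rewrite expr0 !divr1; have := (inball h hh).2; lra.
  have p0 : (0 < 2 ^+ n :> R) by apply: exprn_gt0.
  have -> : x0 + h / 2 ^+ n.+1 = (x0 + (x0 + h / 2 ^+ n)) / 2.
    by rewrite exprS; field; rewrite gt_eqF.
  have -> : (K - f x0) / 2 ^+ n.+1 = (K - f x0) / 2 ^+ n / 2.
    by rewrite exprS; field; rewrite gt_eqF.
  have := J x0 (x0 + h / 2 ^+ n) hx0 (inball _ (small n h hh)).1; lra.
have bnd u n : `|u| < r / 2 ^+ n -> `|f (x0 + u) - f x0| <= (K - f x0) / 2 ^+ n.
  move=> hu.
  have p0 : (0 < 2 ^+ n :> R) by apply: exprn_gt0.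
  have hh : `|u * 2 ^+ n| < r by rewrite normrM (gtr0_norm p0) -ltr_pdivlMr.
  have hh' : `|- (u * 2 ^+ n)| < r by rewrite normrN.
  have U := up n _ hh; rewrite mulfK ?gt_eqF // in U.
  have L := up n _ hh'; rewrite mulNr mulfK ?gt_eqF // in L.
  have hur : `|u| < r.
    apply: lt_le_trans hu _; rewrite ler_pdivrMr //.
    have := p2 n; nra.
  have hxu := inball u hur.
  have hxmu : a < x0 + - u < b /\ f (x0 + - u) <= K by apply: inball; rewrite normrN.
  have Jm := J (x0 + u) (x0 + - u) hxu.1 hxmu.1.
  rewrite (_ : (x0 + u + (x0 + - u)) / 2 = x0) in Jm; last by field.
  rewrite ler_norml; apply/andP; split; lra.
apply/cvgrPdist_lt => eps e0.
have [n Hn] := @pow2_big eps (K - f x0) e0.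
have p0 : (0 < 2 ^+ n :> R) by apply: exprn_gt0.
apply/nbhs_ballP; exists (r / 2 ^+ n); first by rewrite /= divr_gt0.
move=> t Ht; rewrite /ball_ /= in Ht.
have HB := bnd (t - x0) n.
rewrite (_ : x0 + (t - x0) = t) in HB; last by rewrite addrC subrK.
rewrite distrC; apply: le_lt_trans (HB _) _; first by rewrite distrC.
by rewrite ltr_pdivrMr.
Qed.
End Conv.

Theorem theorem3p4 (R : realType) (h : R -> R) (a b : R) (f : R -> R) :
  (forall x, 0 <= h x) ->
  (forall x y, h x * h y <= h (x * y)) ->
  (forall t, t <= h t) ->
  h 1 = 1 ->
  (forall x y, a < x < b -> a < y < b ->
     f ((x + y) / 2) <= h (2^-1) * (f x + f y)) ->
  (exists M : set R,
     [/\ M `<=` `]a, b[, lebesgue_measurable M, (0 < lebesgue_meas M)%E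
       & exists K : R, forall x, M x -> f x <= K]) ->
  forall x : R, a < x < b -> {for x, continuous f}.
Proof.
move=> h0 hmul hge h1 hmid [M [Msub mM Mpos [K HK]]] x hx.
have h2 : h (2^-1) = 2^-1.
  have := hmul 2 (2^-1); rewrite mulfV ?h1; last by rewrite pnatr_eq0.
  have := hge 2; have := hge (2^-1); have := h0 (2^-1); nra.
have J : forall x y, a < x < b -> a < y < b -> f ((x + y) / 2) <= (f x + f y) / 2.
  by move=> x1 y1 hx1 hy1; have := hmid _ _ hx1 hy1; rewrite h2; lra.
have Mfin : ((wlength (R:=R) idfun)^*%mu M < +oo)%E.
  apply: (le_lt_trans (lam_le _ _ Msub)); rewrite lam_itv /=.
  by case: ifP => _; rewrite ?ltry.
have [p [q [pq Hpq]]] := @lam_dense R M Mpos Mfin.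
have [c0 [r0 [r00 Hc]]] := @lam_mid R M p q mM pq Hpq.
have B : Bd a b f c0 r0 K.
  split => // t /Hc [x' [y' [Mx My ->]]].
  have := Msub _ Mx; have := Msub _ My; rewrite /= !in_itv /= => /andP[y1 y2] /andP[x1 x2].
  split; first by apply/andP; split; lra.
  have hx' : a < x' < b by apply/andP.
  have hy' : a < y' < b by apply/andP.
  have := J x' y' hx' hy'; have := HK _ Mx; have := HK _ My; lra.
have [r' [K' B']] := @Bd_at R a b f J c0 r0 K x B hx.
exact: (@cont_at R a b f J x r' K' B').
Qed.
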